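(* Consider $N$ agents $$\dot x_i=\sum_{j=1}^N\alpha_{ij}(y_j-y_i),\qquad y_i=\mathrm{sat}_i(x_i),\qquad i\in\mathcal V=\{1,\dots,N\},$$ where the constant weights $\alpha_{ij}\ge0$ define a directed, strongly connected graph with Laplacian $L$, and let $p=(p_1,\dots,p_N)^T$ be the left eigenvector of $L$ for eigenvalue $0$ normalized so that $\sum_i p_i=1$ (so $p_i>0$). Assume not all $x_i(t_0)$ are equal. Then the agents achieve consensus if and only if $$\Big|\sum_{i=1}^N p_i x_i(t_0)\Big|\le\min_{i\in\mathcal V}s_i.$$
   Context: $\mathrm{sat}_i(x)=\mathrm{sign}(x)\min\{|x|,s_i\}$ with $s_i>0$. $L=\mathrm{diag}(A\mathbf 1)-A$, $A=[\alpha_{ij}]$, $\alpha_{ij}>0$ iff $(i,j)$ is an edge. Strongly connected: a directed path exists between any two distinct nodes. Consensus: there is $C$ with $\lim_{t\to\infty}x_i(t)=C$ for all $i$. *)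

(* Defs.v *)
From Stdlib Require Import Reals Lra Relations.
Open Scope R_scope.

Fixpoint fsum (n : nat) (f : nat -> R) : R :=
  match n with
  | O => 0
  | S m => fsum m f + f m
  end.

Definition sign (x : R) : R :=
  if Rlt_dec 0 x then 1 else if Rlt_dec x 0 then -1 else 0.

Definition sat (si x : R) : R := sign x * Rmin (Rabs x) si.

Definition edge (N : nat) (alpha : nat -> nat -> R) (i j : nat) : Prop :=
  (i < N)%nat /\ (j < N)%nat /\ alpha i j > 0.

Definition strongly_connected (N : nat) (alpha : nat -> nat -> R) : Prop :=
  forall i j, (i < N)%nat -> (j < N)%nat -> i <> j ->
    clos_trans nat (edge N alpha) i j.

Definition laplacian (N : nat) (alpha : nat -> nat -> R) (i j : nat) : R :=
  (if Nat.eq_dec i j then fsum N (fun k => alpha i k) else 0) - alpha i j.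

Definition left_null (N : nat) (alpha : nat -> nat -> R) (p : nat -> R) : Prop :=
  forall j, (j < N)%nat -> fsum N (fun i => p i * laplacian N alpha i j) = 0.

Definition is_solution (N : nat) (alpha : nat -> nat -> R) (s : nat -> R)
    (t0 : R) (x : nat -> R -> R) : Prop :=
  forall i t, (i < N)%nat -> t0 <= t ->
    derivable_pt_lim (x i) t
      (fsum N (fun j => alpha i j * (sat (s j) (x j t) - sat (s i) (x i t)))).

Definition consensus (N : nat) (x : nat -> R -> R) : Prop :=
  exists C : R, forall i, (i < N)%nat ->
    forall eps, eps > 0 -> exists T, forall t, t >= T -> Rabs (x i t - C) < eps.

(* Main.v *)
Require Import Defs.
From Stdlib Require Import Reals Lra Lia Relations Classical.
Open Scope R_scope.

Lemma fsum_ext n f g : (forall i, (i < n)%nat -> f i = g i) -> fsum n f = fsum n g.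
Proof. induction n; simpl; intros H; [reflexivity|]. rewrite IHn by (intros; apply H; lia). rewrite H by lia. reflexivity. Qed.

Lemma fsum_plus n f g : fsum n (fun i => f i + g i) = fsum n f + fsum n g.
Proof. induction n; simpl; [lra|]. rewrite IHn; lra. Qed.

Lemma fsum_minus n f g : fsum n (fun i => f i - g i) = fsum n f - fsum n g.
Proof. induction n; simpl; [lra|]. rewrite IHn; lra. Qed.

Lemma fsum_scal n a f : fsum n (fun i => a * f i) = a * fsum n f.
Proof. induction n; simpl; [lra|]. rewrite IHn; lra. Qed.

Lemma fsum_scalr n a f : fsum n (fun i => f i * a) = fsum n f * a.
Proof. induction n; simpl; [lra|]. rewrite IHn; lra. Qed.

Lemma fsum_zero n : fsum n (fun _ => 0) = 0.
Proof. induction n; simpl; [lra|]. rewrite IHn; lra. Qed.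

Lemma fsum_const n a : fsum n (fun _ => a) = INR n * a.
Proof. induction n; simpl fsum; [simpl; lra|]. rewrite IHn, S_INR; lra. Qed.

Lemma fsum_le n f g : (forall i, (i < n)%nat -> f i <= g i) -> fsum n f <= fsum n g.
Proof. induction n; simpl; intros H; [lra|]. assert (fsum n f <= fsum n g) by (apply IHn; intros; apply H; lia). assert (f n <= g n) by (apply H; lia). lra. Qed.

Lemma fsum_nonneg n f : (forall i, (i < n)%nat -> 0 <= f i) -> 0 <= fsum n f.
Proof. intros H. rewrite <- (fsum_zero n). apply fsum_le. auto. Qed.

Lemma fsum_term_le n f k : (forall i, (i < n)%nat -> 0 <= f i) -> (k < n)%nat -> f k <= fsum n f.
Proof. induction n; simpl; intros H Hk; [lia|].
  assert (0 <= fsum n f) by (apply fsum_nonneg; intros; apply H; lia).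
  destruct (Nat.eq_dec k n) as [->|Hne].
  - lra.
  - assert (f k <= fsum n f) by (apply IHn; [intros; apply H; lia| lia]). assert (0 <= f n) by (apply H; lia). lra. Qed.

Lemma fsum_nonneg_eq0 n f : (forall i, (i < n)%nat -> 0 <= f i) -> fsum n f = 0 -> forall k, (k < n)%nat -> f k = 0.
Proof. intros H Hs k Hk. pose proof (fsum_term_le n f k H Hk). pose proof (H k Hk). lra. Qed.

Lemma fsum_swap n m f : fsum n (fun i => fsum m (fun j => f i j)) = fsum m (fun j => fsum n (fun i => f i j)).
Proof. induction n; simpl. - rewrite fsum_zero; reflexivity. - rewrite IHn, <- fsum_plus. reflexivity. Qed.

Lemma fsum_delta n a j : (j < n)%nat -> fsum n (fun i => if Nat.eq_dec i j then a i else 0) = a j.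
Proof. induction n; simpl; intros Hj; [lia|].
  destruct (Nat.eq_dec n j) as [->|Hne].
  - rewrite (fsum_ext j _ (fun _ => 0)). rewrite fsum_zero; lra.
    intros i Hi. destruct (Nat.eq_dec i j); [lia|reflexivity].
  - rewrite IHn by lia. lra. Qed.

Lemma fsum_abs n f : Rabs (fsum n f) <= fsum n (fun i => Rabs (f i)).
Proof. induction n; simpl. - rewrite Rabs_R0; lra. - eapply Rle_trans; [apply Rabs_triang|]. lra. Qed.

Lemma fsum_indic_full n f : (forall i, (i < n)%nat -> f i <= 1) -> INR n <= fsum n f -> forall k, (k < n)%nat -> f k = 1.
Proof. intros H Hs k Hk.
  assert (fsum n (fun i => 1 - f i) = 0).
  { rewrite fsum_minus, fsum_const. assert (fsum n (fun i => 1 - f i) >= 0).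
    { apply Rle_ge, fsum_nonneg. intros i Hi; specialize (H i Hi); lra. }
    rewrite fsum_minus, fsum_const in H0. lra. }
  pose proof (fsum_nonneg_eq0 n (fun i => 1 - f i)). simpl in H1.
  assert (1 - f k = 0) by (apply H1; auto; intros i Hi; specialize (H i Hi); lra). lra. Qed.

Lemma fsum_le_strict1 n f g k : (forall i, (i < n)%nat -> f i <= g i) -> (k < n)%nat -> f k + 1 <= g k -> fsum n f + 1 <= fsum n g.
Proof. intros H Hk Hfk.
  assert (0 <= fsum n (fun i => g i - f i) - (g k - f k)).
  { pose proof (fsum_term_le n (fun i => g i - f i) k). simpl in H0. assert (g k - f k <= fsum n (fun i => g i - f i)) by (apply H0; auto; intros i Hi; specialize (H i Hi); lra). lra. }
  rewrite fsum_minus in H0. lra. Qed.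

Lemma dpl_ext f g t l : (forall u, f u = g u) -> derivable_pt_lim f t l -> derivable_pt_lim g t l.
Proof. intros H D eps He. destruct (D eps He) as [d Hd]. exists d. intros h Hh Hh'. rewrite <- !H. auto. Qed.

Lemma dpl_l f t l l' : l = l' -> derivable_pt_lim f t l -> derivable_pt_lim f t l'.
Proof. intros ->; auto. Qed.

Lemma dpl_fsum n (F : nat -> R -> R) l t : (forall i, (i < n)%nat -> derivable_pt_lim (F i) t (l i)) ->
  derivable_pt_lim (fun u => fsum n (fun i => F i u)) t (fsum n l).
Proof. induction n; simpl; intros H.
  - apply (dpl_ext (fct_cte 0)); [reflexivity|]. apply derivable_pt_lim_const.
  - apply (dpl_ext ((fun u => fsum n (fun i => F i u)) + F n)%F); [reflexivity|].
    apply derivable_pt_lim_plus; [apply IHn; intros; apply H; lia| apply H; lia]. Qed.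

Lemma dpl_scal a f t l : derivable_pt_lim f t l -> derivable_pt_lim (fun u => a * f u) t (a * l).
Proof. intros H. apply (dpl_ext (mult_real_fct a f)); [reflexivity|]. apply derivable_pt_lim_scal; auto. Qed.

Lemma dpl_comp f g t l1 l2 : derivable_pt_lim f t l1 -> derivable_pt_lim g (f t) l2 -> derivable_pt_lim (fun u => g (f u)) t (l2 * l1).
Proof. intros H1 H2. apply (dpl_ext (comp g f)); [reflexivity|]. apply derivable_pt_lim_comp; auto. Qed.

Lemma decr_interval f f' a b : a <= b -> (forall c, a <= c <= b -> derivable_pt_lim f c (f' c)) -> (forall c, a <= c <= b -> f' c <= 0) -> f b <= f a.
Proof. intros Hab Hd Hn. destruct (Req_dec a b) as [->|Hne]; [lra|].
  destruct (MVT_cor2 f f' a b) as [c [Hc1 Hc2]]; [lra|auto|].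
  assert (f' c <= 0) by (apply Hn; lra). assert (f' c * (b - a) <= 0) by nra. lra. Qed.

Lemma const_interval f f' a b : a <= b -> (forall c, a <= c <= b -> derivable_pt_lim f c (f' c)) -> (forall c, a <= c <= b -> f' c = 0) -> f b = f a.
Proof. intros Hab Hd Hn. destruct (Req_dec a b) as [->|Hne]; [lra|].
  destruct (MVT_cor2 f f' a b) as [c [Hc1 Hc2]]; [lra|auto|]. rewrite Hn in Hc1 by lra. lra. Qed.

Lemma sat_mid si x : 0 < si -> -si <= x <= si -> sat si x = x.
Proof. intros Hs Hx. unfold sat, sign, Rmin.
  destruct (Rlt_dec 0 x); [|destruct (Rlt_dec x 0)].
  - rewrite Rabs_right by lra. destruct (Rle_dec x si); lra.
  - rewrite Rabs_left by lra. destruct (Rle_dec (-x) si); lra.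
  - lra. Qed.
Lemma sat_hi si x : 0 < si -> si <= x -> sat si x = si.
Proof. intros Hs Hx. unfold sat, sign, Rmin.
  destruct (Rlt_dec 0 x); [|lra]. rewrite Rabs_right by lra. destruct (Rle_dec x si); lra. Qed.
Lemma sat_lo si x : 0 < si -> x <= -si -> sat si x = - si.
Proof. intros Hs Hx. unfold sat, sign, Rmin.
  destruct (Rlt_dec 0 x); [lra|]. destruct (Rlt_dec x 0); [|lra]. rewrite Rabs_left by lra. destruct (Rle_dec (-x) si); lra. Qed.

Ltac satc si x Hs :=
  let H := fresh in
  destruct (Rle_lt_dec x (-si)) as [H|H];
  [rewrite (sat_lo si x Hs H) in *
  | destruct (Rle_lt_dec si x) as [?|?];
    [rewrite (sat_hi si x Hs) in * by lra | rewrite (sat_mid si x Hs) in * by lra]].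

Lemma sat_bound si x : 0 < si -> Rabs (sat si x) <= si.
Proof. intros Hs. satc si x Hs; unfold Rabs; repeat destruct Rcase_abs; lra. Qed.

Lemma sat_lip si a b : 0 < si -> Rabs (sat si a - sat si b) <= Rabs (a - b).
Proof. intros Hs. satc si a Hs; satc si b Hs; unfold Rabs; repeat destruct Rcase_abs; lra. Qed.

Lemma sat_flat si C M x : 0 < si -> sat si C = M -> M <> C -> Rabs (x - C) < Rabs (C - M) -> sat si x = M.
Proof. intros Hs HM HMC Hx. subst M. satc si C Hs; try lra; satc si x Hs; revert Hx; unfold Rabs; repeat destruct Rcase_abs; lra. Qed.

Definition F si x := x * sat si x - (sat si x) * (sat si x) / 2.

Lemma F_bound si x y : 0 < si -> 0 <= F si y - F si x - sat si x * (y - x) <= (y - x) * (y - x).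
Proof. intros Hs. pose proof (Rle_0_sqr (y-x)) as Q; unfold Rsqr in Q. unfold F. satc si x Hs; satc si y Hs; split; nra. Qed.

Lemma F_deriv si x : 0 < si -> derivable_pt_lim (F si) x (sat si x).
Proof. intros Hs eps He. exists (mkposreal eps He). intros h Hh Hh'. simpl in Hh'.
  pose proof (F_bound si x (x + h) Hs) as [B1 B2].
  replace (x + h - x) with h in * by ring.
  assert (E: (F si (x + h) - F si x) / h - sat si x = (F si (x + h) - F si x - sat si x * h) / h) by (field; auto).
  rewrite E. unfold Rdiv. rewrite Rabs_mult, Rabs_inv.
  rewrite (Rabs_right (F si (x + h) - F si x - sat si x * h)) by lra.
  assert (0 < Rabs h) by (apply Rabs_pos_lt; auto).
  apply (Rle_lt_trans _ (h * h * / Rabs h)).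
  - apply Rmult_le_compat_r; [left; apply Rinv_0_lt_compat; auto| lra].
  - replace (h * h) with (Rabs h * Rabs h) by (rewrite <- Rabs_mult; apply Rabs_right; nra).
    field_simplify; lra. Qed.

Lemma e_lo si c x d : 0 < si -> 0 <= c <= si -> 0 < d <= si -> x <= c - d ->
  d * d / 2 <= F si x - F si c - c * (x - c).
Proof. intros Hs Hc Hd Hx. unfold F. rewrite (sat_mid si c) by lra. satc si x Hs; nra. Qed.

Lemma e_hi si c x d : 0 < si -> -si <= c <= 0 -> 0 < d <= si -> c + d <= x ->
  d * d / 2 <= F si x - F si c - c * (x - c).
Proof. intros Hs Hc Hd Hx. unfold F. rewrite (sat_mid si c) by lra. satc si x Hs; nra. Qed.

Definition dg N (alpha : nat -> nat -> R) i := fsum N (fun k => alpha i k).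

Lemma colbal N alpha p : left_null N alpha p -> forall j, (j < N)%nat ->
  fsum N (fun i => p i * alpha i j) = p j * dg N alpha j.
Proof. intros H j Hj. specialize (H j Hj). unfold laplacian in H.
  rewrite (fsum_ext _ _ (fun i => (if Nat.eq_dec i j then p i * dg N alpha i else 0) - p i * alpha i j)) in H.
  2:{ intros i Hi. unfold dg. destruct (Nat.eq_dec i j); ring. }
  rewrite fsum_minus, (fsum_delta N (fun i => p i * dg N alpha i)) in H by auto. lra. Qed.

Lemma balance N alpha p z : left_null N alpha p ->
  fsum N (fun i => p i * fsum N (fun j => alpha i j * z j)) = fsum N (fun j => p j * dg N alpha j * z j).
Proof. intros H.
  rewrite (fsum_ext _ _ (fun i => fsum N (fun j => p i * alpha i j * z j))).
  2:{ intros i Hi. rewrite <- fsum_scal. apply fsum_ext. intros; ring. }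
  rewrite fsum_swap. apply fsum_ext. intros j Hj. rewrite fsum_scalr, colbal; auto. Qed.

Lemma inner1 N alpha y i : fsum N (fun j => alpha i j * (y j - y i)) = fsum N (fun j => alpha i j * y j) - y i * dg N alpha i.
Proof. unfold dg. rewrite <- fsum_scal, <- fsum_minus. apply fsum_ext; intros; ring. Qed.

Lemma inner2 N alpha y i : fsum N (fun j => alpha i j * ((y j - y i) * (y j - y i))) =
  fsum N (fun j => alpha i j * (y j * y j)) - 2 * y i * fsum N (fun j => alpha i j * y j) + y i * y i * dg N alpha i.
Proof. unfold dg. rewrite <- !fsum_scal, <- fsum_minus, <- fsum_plus. apply fsum_ext; intros; ring. Qed.

Lemma invariant_alg N alpha p y : left_null N alpha p ->
  fsum N (fun i => p i * fsum N (fun j => alpha i j * (y j - y i))) = 0.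
Proof. intros H.
  rewrite (fsum_ext _ _ (fun i => p i * fsum N (fun j => alpha i j * y j) - p i * dg N alpha i * y i)).
  2:{ intros i Hi. rewrite (inner1 N alpha y i). ring. }
  rewrite fsum_minus, balance by auto. ring. Qed.

Lemma lyap_alg N alpha p y : left_null N alpha p ->
  fsum N (fun i => p i * (y i * fsum N (fun j => alpha i j * (y j - y i)))) =
  - / 2 * fsum N (fun i => p i * fsum N (fun j => alpha i j * ((y j - y i) * (y j - y i)))).
Proof. intros H.
  assert (E2: fsum N (fun i => p i * fsum N (fun j => alpha i j * ((y j - y i) * (y j - y i)))) =
    fsum N (fun i => (p i * fsum N (fun j => alpha i j * (y j * y j))) + (- 2) * (p i * (y i * fsum N (fun j => alpha i j * y j))) + p i * dg N alpha i * (y i * y i))).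
  { apply fsum_ext. intros i Hi. rewrite (inner2 N alpha y i). ring. }
  assert (E1: fsum N (fun i => p i * (y i * fsum N (fun j => alpha i j * (y j - y i)))) =
    fsum N (fun i => p i * (y i * fsum N (fun j => alpha i j * y j)) - p i * dg N alpha i * (y i * y i))).
  { apply fsum_ext. intros i Hi. rewrite (inner1 N alpha y i). ring. }
  rewrite E1, E2, !fsum_plus, fsum_minus, fsum_scal, balance by auto. lra. Qed.

Lemma crossing (R0 : nat -> nat -> Prop) (P : nat -> Prop) a b : clos_trans nat R0 a b -> P a -> ~ P b ->
  exists u v, R0 u v /\ P u /\ ~ P v.
Proof. induction 1 as [a b Hab| a c b H1 IH1 H2 IH2]; intros Pa Pb.
  - exists a, b; auto.
  - destruct (classic (P c)) as [Pc|Pc]; [apply IH2; auto| apply IH1; auto]. Qed.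

Lemma reach_back (R0 : nat -> nat -> Prop) (P : nat -> Prop) : (forall u v, R0 u v -> P v -> P u) ->
  forall a b, clos_trans nat R0 a b -> P b -> P a.
Proof. intros H a b C. induction C; eauto. Qed.

Lemma reach_fwd (R0 : nat -> nat -> Prop) (P : nat -> Prop) : (forall u v, R0 u v -> P u -> P v) ->
  forall a b, clos_trans nat R0 a b -> P a -> P b.
Proof. intros H a b C. induction C; eauto. Qed.

Lemma p_pos N alpha p : (forall i j, (i < N)%nat -> (j < N)%nat -> 0 <= alpha i j) ->
  strongly_connected N alpha -> left_null N alpha p -> fsum N p = 1 ->
  forall k, (k < N)%nat -> 0 < p k.
Proof. intros Ha Hsc Hl Hs.
  set (pp := fun j => Rmax (p j) 0).
  assert (Hpp: forall j, 0 <= pp j /\ p j <= pp j) by (intros; unfold pp; split; [apply Rmax_r|apply Rmax_l]).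
  assert (Hslack: forall j, (j < N)%nat -> 0 <= fsum N (fun i => pp i * alpha i j) - pp j * dg N alpha j).
  { intros j Hj. unfold pp at 2. destruct (Rle_dec (p j) 0).
    - rewrite Rmax_right by lra. assert (0 <= fsum N (fun i => pp i * alpha i j)).
      { apply fsum_nonneg. intros i Hi. specialize (Hpp i). specialize (Ha i j Hi Hj). nra. } lra.
    - rewrite Rmax_left by lra. rewrite <- colbal by auto.
      assert (fsum N (fun i => p i * alpha i j) <= fsum N (fun i => pp i * alpha i j)).
      { apply fsum_le. intros i Hi. specialize (Hpp i). specialize (Ha i j Hi Hj). nra. } lra. }
  assert (Hsum: fsum N (fun j => fsum N (fun i => pp i * alpha i j) - pp j * dg N alpha j) = 0).
  { rewrite fsum_minus, <- fsum_swap.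
    rewrite (fsum_ext _ (fun i => fsum N (fun j => pp i * alpha i j)) (fun i => pp i * dg N alpha i)). ring.
    intros; unfold dg; rewrite fsum_scal; auto. }
  pose proof (fsum_nonneg_eq0 _ _ Hslack Hsum) as Hz.
  assert (Hback: forall u v, edge N alpha u v -> p v <= 0 -> p u <= 0).
  { intros u v [Hu [Hv Huv]] Hpv. specialize (Hz v Hv). simpl in Hz.
    assert (pp v = 0) by (unfold pp; rewrite Rmax_right; lra). rewrite H, Rmult_0_l, Rminus_0_r in Hz.
    assert (Hterm: pp u * alpha u v = 0).
    { apply (fsum_nonneg_eq0 N (fun i => pp i * alpha i v)); auto. intros i Hi. specialize (Hpp i); specialize (Ha i v Hi Hv); nra. }
    assert (pp u = 0). { destruct (Rmult_integral _ _ Hterm); lra. }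
    specialize (Hpp u). lra. }
  intros k Hk. destruct (Rlt_le_dec 0 (p k)) as [|Hnk]; auto. exfalso.
  assert (Hall: forall i, (i < N)%nat -> p i <= 0).
  { intros i Hi. destruct (Nat.eq_dec i k) as [->|Hne]; auto.
    apply (reach_back (edge N alpha) (fun v => p v <= 0) Hback i k); auto. }
  assert (fsum N p <= fsum N (fun _ => 0)) by (apply fsum_le; auto). rewrite fsum_zero in H. lra. Qed.

Lemma fin_min n (g : nat -> R) : exists m, 0 < m /\ forall i, (i < n)%nat -> 0 < g i -> m <= g i.
Proof. induction n.
  - exists 1. split; [lra| intros; lia].
  - destruct IHn as [m [Hm H]]. destruct (Rlt_le_dec 0 (g n)).
    + exists (Rmin m (g n)). split; [apply Rmin_glb_lt; auto|]. intros i Hi Hg.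
      destruct (Nat.eq_dec i n) as [->|]; [apply Rmin_r|]. eapply Rle_trans; [apply Rmin_l| apply H; auto; lia].
    + exists m. split; auto. intros i Hi Hg. destruct (Nat.eq_dec i n) as [->|]; [lra|apply H; auto; lia]. Qed.

Lemma fin_min2 n n2 (g : nat -> nat -> R) : exists m, 0 < m /\ forall i j, (i < n)%nat -> (j < n2)%nat -> 0 < g i j -> m <= g i j.
Proof. induction n.
  - exists 1. split; [lra| intros; lia].
  - destruct IHn as [m [Hm H]]. destruct (fin_min n2 (g n)) as [m2 [Hm2 H2]].
    exists (Rmin m m2). split; [apply Rmin_glb_lt; auto|]. intros i j Hi Hj Hg.
    destruct (Nat.eq_dec i n) as [->|]; [eapply Rle_trans; [apply Rmin_r| apply H2; auto]|].
    eapply Rle_trans; [apply Rmin_l| apply H; auto; lia]. Qed.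

Lemma fin_max2 n n2 (g : nat -> nat -> R) : exists M, 0 <= M /\ forall i j, (i < n)%nat -> (j < n2)%nat -> g i j <= M.
Proof. induction n.
  - exists 0. split; [lra| intros; lia].
  - destruct IHn as [M [HM H]].
    assert (exists M2, 0 <= M2 /\ forall j, (j < n2)%nat -> g n j <= M2).
    { clear. induction n2. exists 0; split; [lra|intros; lia].
      destruct IHn2 as [M [HM H]]. exists (Rmax M (g n n2)). split. eapply Rle_trans; [apply HM| apply Rmax_l].
      intros j Hj. destruct (Nat.eq_dec j n2) as [->|]; [apply Rmax_r|]. eapply Rle_trans; [apply H; lia| apply Rmax_l]. }
    destruct H0 as [M2 [HM2 H2]].
    exists (Rmax M M2). split. eapply Rle_trans; [apply HM| apply Rmax_l]. intros i j Hi Hj.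
    destruct (Nat.eq_dec i n) as [->|]; [eapply Rle_trans; [apply H2; auto| apply Rmax_r]|].
    eapply Rle_trans; [apply H; auto; lia| apply Rmax_l]. Qed.

Lemma fin_argmax n (g : nat -> R) : (0 < n)%nat -> exists k, (k < n)%nat /\ forall i, (i < n)%nat -> g i <= g k.
Proof. induction n; intros Hn; [lia|]. destruct (Nat.eq_dec n 0) as [->|Hn0].
  - exists 0%nat. split; [lia|]. intros i Hi. replace i with 0%nat by lia. lra.
  - destruct IHn as [k [Hk H]]; [lia|]. destruct (Rle_dec (g k) (g n)).
    + exists n. split; [lia|]. intros i Hi. destruct (Nat.eq_dec i n) as [->|]; [lra|]. specialize (H i ltac:(lia)); lra.
    + exists k. split; [lia|]. intros i Hi. destruct (Nat.eq_dec i n) as [->|]; [lra|]. apply H; lia. Qed.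

Lemma unif_T n (Q : nat -> R -> Prop) : (forall i, (i < n)%nat -> exists T, forall t, t >= T -> Q i t) ->
  exists T, forall i, (i < n)%nat -> forall t, t >= T -> Q i t.
Proof. induction n; intros H.
  - exists 0. intros; lia.
  - destruct IHn as [T1 H1]; [intros; apply H; lia|]. destruct (H n) as [T2 H2]; [lia|].
    exists (Rmax T1 T2). intros i Hi t Ht. destruct (Nat.eq_dec i n) as [->|].
    + apply H2. pose proof (Rmax_r T1 T2); lra.
    + apply H1; [lia|]. pose proof (Rmax_l T1 T2); lra. Qed.

Lemma Rabs_le_inv a b : Rabs a <= b -> -b <= a <= b.
Proof. unfold Rabs; destruct Rcase_abs; lra. Qed.
Lemma Rabs_lt_inv a b : Rabs a < b -> -b < a < b.
Proof. unfold Rabs; destruct Rcase_abs; lra. Qed.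
Lemma Rabs_gt_inv a b : b < Rabs a -> b < a \/ a < -b.
Proof. unfold Rabs; destruct Rcase_abs; lra. Qed.

Lemma sum_arg N p pm c z d : 0 < pm -> (forall i, (i < N)%nat -> pm <= p i) -> fsum N p = 1 ->
  fsum N (fun i => p i * (z i - c)) = 0 -> 0 <= d -> (forall i, (i < N)%nat -> - d <= z i - c) ->
  forall k, (k < N)%nat -> z k - c <= d / pm.
Proof. intros Hpm Hp Hs Hz Hd Hlo k Hk.
  assert (Hu: fsum N (fun i => p i * (z i - c) + p i * d) = d) by (rewrite fsum_plus, Hz, fsum_scalr, Hs; ring).
  assert (Hk': p k * (z k - c) + p k * d <= d).
  { rewrite <- Hu at 2. apply (fsum_term_le N (fun i => p i * (z i - c) + p i * d)); auto.
    intros i Hi. specialize (Hp i Hi); specialize (Hlo i Hi). nra. }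
  specialize (Hp k Hk). assert (0 < p k) by lra.
  assert (p k * (z k - c) <= d) by nra.
  assert (z k - c <= d / p k). { apply (Rmult_le_reg_l (p k)); auto. field_simplify; lra. }
  assert (d / p k <= d / pm). { unfold Rdiv. apply Rmult_le_compat_l; auto. apply Rinv_le_contravar; auto. }
  lra. Qed.

Lemma sum_arg' N p pm c z d : 0 < pm -> (forall i, (i < N)%nat -> pm <= p i) -> fsum N p = 1 ->
  fsum N (fun i => p i * (z i - c)) = 0 -> 0 <= d -> (forall i, (i < N)%nat -> z i - c <= d) ->
  forall k, (k < N)%nat -> - (d / pm) <= z k - c.
Proof. intros Hpm Hp Hs Hz Hd Hhi k Hk.
  pose proof (sum_arg N p pm (-c) (fun i => - z i) d Hpm Hp Hs) as H. simpl in H.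
  assert (- z k - - c <= d / pm). { apply H; auto.
    - rewrite (fsum_ext _ _ (fun i => -1 * (p i * (z i - c)))) by (intros; ring). rewrite fsum_scal, Hz; ring.
    - intros i Hi; specialize (Hhi i Hi); lra. }
  lra. Qed.

Definition ee si c z := F si z - F si c - c * (z - c).

Lemma ee_nonneg si c z : 0 < si -> Rabs c <= si -> 0 <= ee si c z <= (z - c) * (z - c).
Proof. intros Hs Hc. unfold ee. pose proof (F_bound si c z Hs).
  rewrite (sat_mid si c) in H by (apply Rabs_le_inv in Hc; lra). lra. Qed.

Lemma coercive N p s pm smin c (eps : R) : 0 < pm -> pm <= 1 -> (forall i, (i < N)%nat -> pm <= p i) -> fsum N p = 1 ->
  0 < smin -> (forall i, (i < N)%nat -> smin <= s i) -> (forall i, (i < N)%nat -> Rabs c <= s i) -> 0 < eps ->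
  exists zeta, 0 < zeta /\ forall z, fsum N (fun i => p i * (z i - c)) = 0 ->
     fsum N (fun i => p i * ee (s i) c (z i)) <= zeta -> forall k, (k < N)%nat -> Rabs (z k - c) < eps.
Proof. intros Hpm Hpm1 Hp Hs Hsm Hsi Hc Heps.
  set (d := Rmin (pm * eps / 2) smin).
  assert (Hd: 0 < d) by (apply Rmin_glb_lt; nra).
  assert (Hd1: d <= pm * eps / 2) by apply Rmin_l. assert (Hd2: d <= smin) by apply Rmin_r.
  exists (pm * (d * d) / 4). assert (Hdd0: 0 < d * d) by (apply Rmult_lt_0_compat; lra). split; [apply Rmult_lt_0_compat; [apply Rmult_lt_0_compat; lra|lra]|]. intros z Hz HD k Hk.
  assert (He: forall i, (i < N)%nat -> ee (s i) c (z i) < d * d / 2).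
  { intros i Hi. assert (Hsi0: 0 < s i) by (specialize (Hsi i Hi); lra).
    assert (p i * ee (s i) c (z i) <= pm * (d * d) / 4).
    { eapply Rle_trans; [|apply HD]. apply (fsum_term_le N (fun i => p i * ee (s i) c (z i))); auto.
      intros j Hj. assert (0 < s j) by (specialize (Hsi j Hj); lra). pose proof (ee_nonneg (s j) c (z j) H (Hc j Hj)).
      specialize (Hp j Hj). nra. }
    pose proof (Hp i Hi). pose proof (ee_nonneg (s i) c (z i) Hsi0 (Hc i Hi)).
    assert (pm * ee (s i) c (z i) <= pm * (d * d) / 4) by nra.
    assert (ee (s i) c (z i) <= d * d / 4) by nra. nra. }
  assert (Hdp: d / pm <= eps / 2). { apply (Rmult_le_reg_l pm); auto. field_simplify; nra. }
  assert (Hdle: d <= eps / 2) by nra.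
  destruct (Rle_dec 0 c) as [Hc0|Hc0].
  - assert (Hlo: forall i, (i < N)%nat -> - d <= z i - c).
    { intros i Hi. destruct (Rle_dec (z i) (c - d)) as [Hzi|]; [|lra]. exfalso.
      assert (0 < s i) by (specialize (Hsi i Hi); lra). specialize (Hc i Hi). apply Rabs_le_inv in Hc.
      pose proof (e_lo (s i) c (z i) d H ltac:(lra) ltac:(specialize (Hsi i Hi); lra) Hzi).
      specialize (He i Hi). unfold ee in He. lra. }
    pose proof (sum_arg N p pm c z d Hpm Hp Hs Hz ltac:(lra) Hlo k Hk). specialize (Hlo k Hk).
    apply Rabs_def1; lra.
  - assert (Hhi: forall i, (i < N)%nat -> z i - c <= d).
    { intros i Hi. destruct (Rle_dec (c + d) (z i)) as [Hzi|]; [|lra]. exfalso.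
      assert (0 < s i) by (specialize (Hsi i Hi); lra). specialize (Hc i Hi). apply Rabs_le_inv in Hc.
      pose proof (e_hi (s i) c (z i) d H ltac:(lra) ltac:(specialize (Hsi i Hi); lra) Hzi).
      specialize (He i Hi). unfold ee in He. lra. }
    pose proof (sum_arg' N p pm c z d Hpm Hp Hs Hz ltac:(lra) Hhi k Hk). specialize (Hhi k Hk).
    apply Rabs_def1; lra. Qed.

Lemma D_upper N p s c z eta : (forall i, (i < N)%nat -> 0 <= p i) -> fsum N p = 1 ->
  (forall i, (i < N)%nat -> 0 < s i) -> (forall i, (i < N)%nat -> Rabs c <= s i) ->
  0 <= eta <= 1 -> (forall i, (i < N)%nat -> Rabs (z i - c) <= eta) ->
  fsum N (fun i => p i * ee (s i) c (z i)) <= eta.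
Proof. intros Hp Hs Hsi Hc Heta Hz.
  apply (Rle_trans _ (fsum N (fun i => p i * eta))).
  - apply fsum_le. intros i Hi. pose proof (ee_nonneg (s i) c (z i) (Hsi i Hi) (Hc i Hi)).
    specialize (Hz i Hi). specialize (Hp i Hi).
    assert ((z i - c) * (z i - c) <= eta). { apply Rabs_le_inv in Hz. nra. } nra.
  - rewrite fsum_scalr, Hs. lra. Qed.

Lemma close_x N p s pm c z d : 0 < pm -> pm <= 1 -> (forall i, (i < N)%nat -> pm <= p i) -> fsum N p = 1 ->
  (forall i, (i < N)%nat -> 0 < s i) -> (forall i, (i < N)%nat -> Rabs c <= s i) ->
  fsum N (fun i => p i * (z i - c)) = 0 -> 0 <= d -> (forall i, (i < N)%nat -> d < s i) ->
  (forall i j, (i < N)%nat -> (j < N)%nat -> Rabs (sat (s i) (z i) - sat (s j) (z j)) <= d) ->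
  forall k, (k < N)%nat -> Rabs (z k - c) <= d / pm.
Proof. intros Hpm Hpm1 Hp Hs Hsi Hc Hz Hd Hds Hy k Hk.
  assert (Hdd: d <= d / pm). { apply (Rmult_le_reg_l pm); auto. field_simplify; nra. }
  destruct (classic (exists k, (k < N)%nat /\ s k < Rabs (z k))) as [[m [Hm Hzm]]|Hno].
  - assert (Hsm := Hsi m Hm). apply Rabs_gt_inv in Hzm.
    assert (Hcm := Hc m Hm). apply Rabs_le_inv in Hcm.
    destruct Hzm as [Hzm|Hzm].
    + assert (Hlo: forall i, (i < N)%nat -> - d <= z i - c).
      { intros i Hi. pose proof (Hy i m Hi Hm) as Hyi. rewrite (sat_hi (s m) (z m) Hsm) in Hyi by lra.
        apply Rabs_le_inv in Hyi. pose proof (Hds i Hi). pose proof (Hsi i Hi) as Hs0.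
        satc (s i) (z i) Hs0; lra. }
      pose proof (sum_arg N p pm c z d Hpm Hp Hs Hz Hd Hlo k Hk). specialize (Hlo k Hk).
      apply Rabs_le; lra.
    + assert (Hhi: forall i, (i < N)%nat -> z i - c <= d).
      { intros i Hi. pose proof (Hy i m Hi Hm) as Hyi. rewrite (sat_lo (s m) (z m) Hsm) in Hyi by lra.
        apply Rabs_le_inv in Hyi. pose proof (Hds i Hi). pose proof (Hsi i Hi) as Hs0.
        satc (s i) (z i) Hs0; lra. }
      pose proof (sum_arg' N p pm c z d Hpm Hp Hs Hz Hd Hhi k Hk). specialize (Hhi k Hk).
      apply Rabs_le; lra.
  - assert (Hall: forall i, (i < N)%nat -> - s i <= z i <= s i).
    { intros i Hi. apply Rabs_le_inv. apply Rnot_lt_le. intro. apply Hno; eauto. }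
    assert (Hsz: fsum N (fun j => p j * z j) = c).
    { rewrite (fsum_ext _ _ (fun j => p j * (z j - c) + p j * c)) by (intros; ring).
      rewrite fsum_plus, fsum_scalr, Hs, Hz. lra. }
    assert (E: z k - c = fsum N (fun j => p j * (z k - z j))).
    { rewrite (fsum_ext _ _ (fun j => p j * z k - p j * z j)) by (intros; ring).
      rewrite fsum_minus, fsum_scalr, Hs, Hsz. ring. }
    rewrite E. eapply Rle_trans; [apply fsum_abs|]. eapply Rle_trans; [|apply Hdd].
    apply (Rle_trans _ (fsum N (fun j => p j * d))).
    + apply fsum_le. intros j Hj. specialize (Hy k j Hk Hj).
      rewrite (sat_mid (s k) (z k)), (sat_mid (s j) (z j)) in Hy by auto. rewrite Rabs_mult.
      rewrite (Rabs_right (p j)) by (specialize (Hp j Hj); lra). specialize (Hp j Hj). nra.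
    + rewrite fsum_scalr, Hs; lra.
Qed.

Definition ind (b : R) (a : R) : R := if Rle_dec a b then 1 else 0.

Lemma chain N alpha y g : strongly_connected N alpha -> (0 < N)%nat -> 0 < g ->
  (forall a b, (a < N)%nat -> (b < N)%nat -> alpha a b > 0 -> Rabs (y b - y a) < g) ->
  forall j, (j < N)%nat -> Rabs (y j - y 0%nat) <= INR N * g.
Proof. intros Hsc HN Hg Hy.
  set (cnt := fun k => fsum N (fun j => ind (INR k * g) (Rabs (y j - y 0%nat)))).
  assert (Hind01: forall b a, 0 <= ind b a <= 1) by (intros; unfold ind; destruct Rle_dec; lra).
  assert (Hmono: forall k j, ind (INR k * g) (Rabs (y j - y 0%nat)) <= ind (INR (S k) * g) (Rabs (y j - y 0%nat))).
  { intros k j. unfold ind. rewrite S_INR. destruct (Rle_dec _ (INR k * g)); destruct (Rle_dec _ ((INR k + 1) * g)); try lra. }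
  assert (Hcnt: forall k, INR (Nat.min (S k) N) <= cnt k).
  { induction k.
    - replace (Nat.min 1 N) with 1%nat by lia. simpl INR.
      unfold cnt. eapply Rle_trans; [|apply (fsum_term_le _ _ 0%nat)]; auto.
      + unfold ind. destruct Rle_dec as [|n]; [lra|]. exfalso; apply n. replace (y 0%nat - y 0%nat) with 0 by ring. rewrite Rabs_R0. simpl; lra.
      + intros; apply Hind01.
    - destruct (classic (forall j, (j < N)%nat -> Rabs (y j - y 0%nat) <= INR k * g)) as [Hall|Hnot].
      + assert (cnt k = INR N).
        { unfold cnt. rewrite (fsum_ext _ _ (fun _ => 1)). rewrite fsum_const; ring.
          intros i Hi. unfold ind. destruct Rle_dec as [|n]; auto. exfalso; apply n, Hall; auto. }
        assert (cnt k <= cnt (S k)) by (apply fsum_le; intros; apply Hmono).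
        assert (INR (Nat.min (S (S k)) N) <= INR N) by (apply le_INR; lia). lra.
      + apply not_all_ex_not in Hnot. destruct Hnot as [j Hj].
        apply imply_to_and in Hj. destruct Hj as [Hj Hjn].
        assert (Hj0: j <> 0%nat). { intro; subst. apply Hjn. replace (y 0%nat - y 0%nat) with 0 by ring. rewrite Rabs_R0. apply Rmult_le_pos; [apply pos_INR|lra]. }
        assert (Hct := Hsc 0%nat j HN Hj (not_eq_sym Hj0)).
        destruct (crossing _ (fun v => Rabs (y v - y 0%nat) <= INR k * g) 0%nat j Hct) as [u [v [[Hu [Hv Huv]] [Pu Pv]]]].
        { replace (y 0%nat - y 0%nat) with 0 by ring. rewrite Rabs_R0. apply Rmult_le_pos; [apply pos_INR|lra]. }
        { auto. }
        assert (Hv1: Rabs (y v - y 0%nat) <= INR (S k) * g).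
        { rewrite S_INR. specialize (Hy u v Hu Hv Huv). replace (y v - y 0%nat) with ((y v - y u) + (y u - y 0%nat)) by ring.
          eapply Rle_trans; [apply Rabs_triang|]. lra. }
        assert (cnt k + 1 <= cnt (S k)).
        { apply (fsum_le_strict1 _ _ _ v); auto. unfold ind. destruct Rle_dec; [contradiction|]. destruct Rle_dec; [lra|contradiction]. }
        assert (INR (Nat.min (S (S k)) N) <= INR (Nat.min (S k) N) + 1) by (rewrite <- S_INR; apply le_INR; lia).
        lra. }
  intros j Hj. specialize (Hcnt N). replace (Nat.min (S N) N) with N in Hcnt by lia.
  pose proof (fsum_indic_full N (fun j => ind (INR N * g) (Rabs (y j - y 0%nat)))) as Hf.
  assert (ind (INR N * g) (Rabs (y j - y 0%nat)) = 1) by (apply Hf; auto; intros; apply Hind01).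
  unfold ind in H. destruct Rle_dec; auto; lra. Qed.

Definition Gf N (alpha : nat -> nat -> R) (s : nat -> R) (x : nat -> R -> R) i t :=
  fsum N (fun j => alpha i j * (sat (s j) (x j t) - sat (s i) (x i t))).
Definition Wf N (alpha : nat -> nat -> R) (s p : nat -> R) (x : nat -> R -> R) t :=
  fsum N (fun i => p i * fsum N (fun j => alpha i j * ((sat (s j) (x j t) - sat (s i) (x i t)) * (sat (s j) (x j t) - sat (s i) (x i t))))).
Definition Vf N (s p : nat -> R) (x : nat -> R -> R) t := fsum N (fun i => p i * F (s i) (x i t)).

Lemma S_const N alpha s p t0 x : left_null N alpha p -> is_solution N alpha s t0 x ->
  forall t, t0 <= t -> fsum N (fun i => p i * x i t) = fsum N (fun i => p i * x i t0).
Proof. intros Hl Hsol t Ht.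
  apply (const_interval (fun t => fsum N (fun i => p i * x i t)) (fun t => fsum N (fun i => p i * Gf N alpha s x i t))); auto.
  - intros c Hc. apply (dpl_fsum N (fun i u => p i * x i u) (fun i => p i * Gf N alpha s x i c)).
    intros i Hi. apply dpl_scal. apply Hsol; [auto|lra].
  - intros c Hc. unfold Gf. exact (invariant_alg N alpha p (fun j => sat (s j) (x j c)) Hl). Qed.

Lemma V_deriv N alpha s p t0 x t : (forall i, (i < N)%nat -> 0 < s i) -> left_null N alpha p -> is_solution N alpha s t0 x ->
  t0 <= t -> derivable_pt_lim (Vf N s p x) t (- / 2 * Wf N alpha s p x t).
Proof. intros Hs Hl Hsol Ht.
  apply (dpl_l _ _ (fsum N (fun i => p i * (sat (s i) (x i t) * Gf N alpha s x i t)))).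
  { unfold Gf, Wf. exact (lyap_alg N alpha p (fun j => sat (s j) (x j t)) Hl). }
  apply (dpl_fsum N (fun i u => p i * F (s i) (x i u))). intros i Hi.
  apply dpl_scal. apply (dpl_comp (x i) (F (s i))). apply Hsol; auto. apply F_deriv; auto. Qed.

Lemma W_nonneg N alpha s p x t : (forall i j, (i < N)%nat -> (j < N)%nat -> 0 <= alpha i j) ->
  (forall i, (i < N)%nat -> 0 < p i) -> 0 <= Wf N alpha s p x t.
Proof. intros Ha Hp. unfold Wf. apply fsum_nonneg. intros i Hi. apply Rmult_le_pos; [left; auto|].
  apply fsum_nonneg. intros j Hj. apply Rmult_le_pos; auto. apply Rle_0_sqr. Qed.

Lemma V_decr N alpha s p t0 x a b : (forall i j, (i < N)%nat -> (j < N)%nat -> 0 <= alpha i j) ->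
  (forall i, (i < N)%nat -> 0 < p i) -> (forall i, (i < N)%nat -> 0 < s i) -> left_null N alpha p -> is_solution N alpha s t0 x ->
  t0 <= a -> a <= b -> Vf N s p x b <= Vf N s p x a.
Proof. intros Ha Hp Hs Hl Hsol Ha0 Hab.
  apply (decr_interval _ (fun t => - / 2 * Wf N alpha s p x t)); auto.
  - intros c Hc. apply (V_deriv N alpha s p t0 x); auto; lra.
  - intros c Hc. pose proof (W_nonneg N alpha s p x c Ha Hp). lra. Qed.

Lemma conv_dir N alpha s p t0 x :
  (forall i j, (i < N)%nat -> (j < N)%nat -> 0 <= alpha i j) ->
  strongly_connected N alpha ->
  (forall i, (i < N)%nat -> 0 < s i) ->
  left_null N alpha p -> fsum N p = 1 -> is_solution N alpha s t0 x -> (0 < N)%nat ->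
  (forall i, (i < N)%nat -> Rabs (fsum N (fun k => p k * x k t0)) <= s i) ->
  consensus N x.
Proof. intros Ha Hsc Hs Hl Hp1 Hsol HN Hc.
  set (c := fsum N (fun k => p k * x k t0)) in *.
  pose proof (p_pos N alpha p Ha Hsc Hl Hp1) as Hpos.
  destruct (fin_min N p) as [pm0 [Hpm0 Hpm0p]].
  set (pm := Rmin pm0 1).
  assert (Hpm: 0 < pm) by (apply Rmin_glb_lt; lra). assert (Hpm1: pm <= 1) by apply Rmin_r.
  assert (Hpmp: forall i, (i < N)%nat -> pm <= p i) by (intros i Hi; eapply Rle_trans; [apply Rmin_l| apply Hpm0p; auto]).
  destruct (fin_min N s) as [sm [Hsm Hsmp]].
  assert (Hsms: forall i, (i < N)%nat -> sm <= s i) by (intros; apply Hsmp; auto).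
  destruct (fin_min2 N N alpha) as [am [Ham Hamp]].
  assert (HS: forall t, t0 <= t -> fsum N (fun i => p i * (x i t - c)) = 0).
  { intros t Ht. rewrite (fsum_ext _ _ (fun i => p i * x i t - c * p i)) by (intros; ring).
    rewrite fsum_minus, fsum_scal, Hp1, (S_const N alpha s p t0 x Hl Hsol t Ht). unfold c; ring. }
  set (D := fun t => fsum N (fun i => p i * ee (s i) c (x i t))).
  assert (HDV: forall t, t0 <= t -> D t = Vf N s p x t - c * c / 2).
  { intros t Ht. unfold D, Vf, ee.
    rewrite (fsum_ext _ _ (fun i => p i * F (s i) (x i t) - (c * c / 2 * p i + c * (p i * (x i t - c))))).
    - rewrite fsum_minus, fsum_plus, !fsum_scal, HS, Hp1 by auto. ring.
    - intros i Hi. unfold F at 2. rewrite (sat_mid (s i) c) by (auto; specialize (Hc i Hi); apply Rabs_le_inv in Hc; lra). field. }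
  assert (HD0: forall t, 0 <= D t).
  { intros t. apply fsum_nonneg. intros i Hi. pose proof (ee_nonneg (s i) c (x i t) (Hs i Hi) (Hc i Hi)).
    specialize (Hpos i Hi). nra. }
  exists c. intros i Hi eps Heps.
  destruct (coercive N p s pm sm c eps Hpm Hpm1 Hpmp Hp1 Hsm Hsms Hc Heps) as [zeta [Hzeta Hcoer]].
  set (eta := Rmin 1 zeta).
  assert (Heta: 0 < eta) by (apply Rmin_glb_lt; lra). assert (Heta1: eta <= 1) by apply Rmin_l. assert (Heta2: eta <= zeta) by apply Rmin_r.
  set (d := Rmin (sm / 2) (eta * pm / 2)).
  assert (Hd: 0 < d) by (apply Rmin_glb_lt; nra). assert (Hd1: d <= sm / 2) by apply Rmin_l. assert (Hd2: d <= eta * pm / 2) by apply Rmin_r.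
  assert (HdN: 0 < INR N) by (apply lt_0_INR; auto).
  set (g := d / (2 * INR N)).
  assert (Hg: 0 < g) by (unfold g; apply Rdiv_lt_0_compat; lra).
  set (w := pm * am * (g * g)).
  assert (Hw: 0 < w) by (unfold w; apply Rmult_lt_0_compat; [apply Rmult_lt_0_compat; auto| nra]).
  set (L := 2 * D t0 / w + 1).
  assert (HL: 0 < L). { unfold L. pose proof (HD0 t0). assert (0 <= 2 * D t0 / w) by (apply Rmult_le_pos; [lra| left; apply Rinv_0_lt_compat; auto]). lra. }
  destruct (MVT_cor2 (Vf N s p x) (fun t => - / 2 * Wf N alpha s p x t) t0 (t0 + L)) as [xi [Hxi1 Hxi2]]; [lra| intros; apply (V_deriv N alpha s p t0 x); auto; lra |].
  assert (HW: Wf N alpha s p x xi < w).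
  { assert (E0 := HDV t0 (Rle_refl _)). assert (E1 := HDV (t0 + L) ltac:(lra)).
    replace (t0 + L - t0) with L in Hxi1 by ring.
    assert (Wf N alpha s p x xi * L <= 2 * D t0) by (pose proof (HD0 (t0 + L)); nra).
    assert (w * L = 2 * D t0 + w) by (unfold L; field; lra).
    apply (Rmult_lt_reg_r L); auto. lra. }
  assert (Hedge: forall a b, (a < N)%nat -> (b < N)%nat -> alpha a b > 0 ->
     Rabs (sat (s b) (x b xi) - sat (s a) (x a xi)) < g).
  { intros a b Ha' Hb' Hab. set (Dl := sat (s b) (x b xi) - sat (s a) (x a xi)).
    assert (Hin: alpha a b * (Dl * Dl) <= fsum N (fun j => alpha a j * ((sat (s j) (x j xi) - sat (s a) (x a xi)) * (sat (s j) (x j xi) - sat (s a) (x a xi))))).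
    { apply (fsum_term_le N (fun j => alpha a j * ((sat (s j) (x j xi) - sat (s a) (x a xi)) * (sat (s j) (x j xi) - sat (s a) (x a xi))))); auto.
      intros j Hj. apply Rmult_le_pos; auto. apply Rle_0_sqr. }
    assert (Hout: p a * fsum N (fun j => alpha a j * ((sat (s j) (x j xi) - sat (s a) (x a xi)) * (sat (s j) (x j xi) - sat (s a) (x a xi)))) <= Wf N alpha s p x xi).
    { unfold Wf. apply (fsum_term_le N (fun i => p i * fsum N (fun j => alpha i j * ((sat (s j) (x j xi) - sat (s i) (x i xi)) * (sat (s j) (x j xi) - sat (s i) (x i xi)))))); auto.
      intros k Hk. apply Rmult_le_pos; [left; auto|]. apply fsum_nonneg. intros j Hj. apply Rmult_le_pos; auto. apply Rle_0_sqr. }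
    assert (HDl: 0 <= Dl * Dl) by apply Rle_0_sqr.
    assert (Hpa := Hpmp a Ha'). assert (Hama := Hamp a b Ha' Hb' Hab).
    assert (pm * am * (Dl * Dl) <= p a * (alpha a b * (Dl * Dl))).
    { assert (pm * am <= p a * alpha a b) by (apply Rmult_le_compat; lra). nra. }
    assert (Dl * Dl < g * g).
    { apply (Rmult_lt_reg_l (pm * am)); [apply Rmult_lt_0_compat; auto|].
      assert (p a * (alpha a b * (Dl * Dl)) <= p a * fsum N (fun j => alpha a j * ((sat (s j) (x j xi) - sat (s a) (x a xi)) * (sat (s j) (x j xi) - sat (s a) (x a xi))))).
      { apply Rmult_le_compat_l; [left; apply Hpos; auto| auto]. }
      unfold w in HW. lra. }
    destruct (Rlt_le_dec (Rabs Dl) g) as [|Hge]; auto. exfalso.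
    assert (Rabs Dl * Rabs Dl = Dl * Dl) by (rewrite <- Rabs_mult; apply Rabs_right; lra).
    assert (g * g <= Rabs Dl * Rabs Dl) by (apply Rmult_le_compat; lra). lra. }
  pose proof (chain N alpha (fun j => sat (s j) (x j xi)) g Hsc HN Hg Hedge) as Hch. simpl in Hch.
  assert (HNg: INR N * g = d / 2) by (unfold g; field; lra).
  assert (Hpair: forall i j, (i < N)%nat -> (j < N)%nat -> Rabs (sat (s i) (x i xi) - sat (s j) (x j xi)) <= d).
  { intros i0 j0 Hi0 Hj0. specialize (Hch i0 Hi0) as H1. specialize (Hch j0 Hj0) as H2.
    replace (sat (s i0) (x i0 xi) - sat (s j0) (x j0 xi)) with ((sat (s i0) (x i0 xi) - sat (s 0%nat) (x 0%nat xi)) - (sat (s j0) (x j0 xi) - sat (s 0%nat) (x 0%nat xi))) by ring.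
    eapply Rle_trans; [apply Rabs_triang|]. rewrite Rabs_Ropp. lra. }
  assert (Hclose: forall k, (k < N)%nat -> Rabs (x k xi - c) <= eta).
  { intros k Hk. eapply Rle_trans.
    - apply (close_x N p s pm c (fun i => x i xi) d Hpm Hpm1 Hpmp Hp1 Hs Hc); auto; try lra.
      + apply HS; lra.
      + intros i0 Hi0. specialize (Hsms i0 Hi0). lra.
    - apply (Rmult_le_reg_l pm); auto. unfold Rdiv. field_simplify; nra. }
  assert (HDxi: D xi <= zeta).
  { pose proof (D_upper N p s c (fun i => x i xi) eta) as HU. unfold D. simpl in HU.
    eapply Rle_trans; [apply HU|lra]; auto. intros; left; auto. lra. }
  exists xi. intros t Ht.
  apply (Hcoer (fun i => x i t)); auto.
  - apply HS; lra.
  - fold (D t). assert (D t <= D xi).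
    { rewrite !HDV by lra. pose proof (V_decr N alpha s p t0 x xi t Ha Hpos Hs Hl Hsol ltac:(lra) ltac:(lra)). lra. }
    lra. Qed.

Lemma dpl_sq f t l C : derivable_pt_lim f t l -> derivable_pt_lim (fun u => (f u - C) * (f u - C)) t (2 * (f t - C) * l).
Proof. intros H.
  assert (H1: derivable_pt_lim (fun u => f u - C) t l).
  { apply (dpl_ext (minus_fct f (fct_cte C))); [reflexivity|]. apply (dpl_l _ _ (l - 0)); [ring|].
    apply derivable_pt_lim_minus; auto. apply derivable_pt_lim_const. }
  apply (dpl_ext (mult_fct (fun u => f u - C) (fun u => f u - C))); [reflexivity|].
  apply (dpl_l _ _ (l * (f t - C) + (f t - C) * l)); [ring|]. exact (derivable_pt_lim_mult _ _ t l l H1 H1). Qed.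

Lemma dpl_expK K t : derivable_pt_lim (fun u => exp (K * u)) t (exp (K * t) * K).
Proof. apply (dpl_comp (fun u => K * u) exp). apply (dpl_l _ _ (K * 1)); [ring|]. apply dpl_scal.
  apply (dpl_ext id); [reflexivity|]. apply derivable_pt_lim_id. apply derivable_pt_lim_exp. Qed.

Lemma onlyif_dir N alpha s p t0 x :
  (forall i j, (i < N)%nat -> (j < N)%nat -> 0 <= alpha i j) ->
  strongly_connected N alpha ->
  (forall i, (i < N)%nat -> 0 < s i) ->
  left_null N alpha p -> fsum N p = 1 -> is_solution N alpha s t0 x -> (0 < N)%nat ->
  (exists i j, (i < N)%nat /\ (j < N)%nat /\ x i t0 <> x j t0) ->
  consensus N x ->
  (forall i, (i < N)%nat -> Rabs (fsum N (fun k => p k * x k t0)) <= s i).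
Proof. intros Ha Hsc Hs Hl Hp1 Hsol HN Hne [C HC].
  pose proof (p_pos N alpha p Ha Hsc Hl Hp1) as Hpos.
  assert (HU: forall eps, 0 < eps -> exists T, forall i, (i < N)%nat -> forall t, t >= T -> Rabs (x i t - C) < eps).
  { intros eps He. apply (unif_T N (fun i t => Rabs (x i t - C) < eps)). intros i Hi. apply HC; auto; lra. }
  set (c := fsum N (fun k => p k * x k t0)).
  assert (HcC: c = C).
  { destruct (Req_dec c C) as [|Hn]; auto. exfalso.
    assert (He: 0 < Rabs (c - C) / 2) by (apply Rdiv_lt_0_compat; [apply Rabs_pos_lt; lra| lra]).
    destruct (HU _ He) as [T HT]. set (t := Rmax T t0).
    assert (Ht0: t0 <= t) by apply Rmax_r. assert (HtT: t >= T) by (apply Rle_ge, Rmax_l).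
    assert (E: c - C = fsum N (fun i => p i * (x i t - C))).
    { rewrite (fsum_ext _ _ (fun i => p i * x i t - C * p i)) by (intros; ring).
      rewrite fsum_minus, fsum_scal, Hp1. unfold c. rewrite <- (S_const N alpha s p t0 x Hl Hsol t Ht0). ring. }
    assert (Rabs (c - C) <= Rabs (c - C) / 2).
    { rewrite E at 1. eapply Rle_trans; [apply fsum_abs|].
      apply (Rle_trans _ (fsum N (fun i => p i * (Rabs (c - C) / 2)))).
      - apply fsum_le. intros i Hi. rewrite Rabs_mult, (Rabs_right (p i)) by (apply Rle_ge; left; apply Hpos; auto).
        apply Rmult_le_compat_l; [left; auto|]. left; apply HT; auto.
      - rewrite fsum_scalr, Hp1. lra. }
    assert (0 < Rabs (c - C)) by (apply Rabs_pos_lt; lra). lra. }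
  set (z := fun j => sat (s j) C).
  assert (Hf: forall i, (i < N)%nat -> fsum N (fun j => alpha i j * (z j - z i)) = 0).
  { intros i Hi. set (f := fsum N (fun j => alpha i j * (z j - z i))).
    destruct (Req_dec f 0) as [|Hf]; auto. exfalso.
    set (kap := Rabs f / 2). assert (Hk: 0 < kap) by (apply Rdiv_lt_0_compat; [apply Rabs_pos_lt; auto|lra]).
    assert (Hdi: 0 <= dg N alpha i) by (apply fsum_nonneg; intros; apply Ha; auto).
    set (rho := kap / (2 * (dg N alpha i + 1))).
    assert (Hr: 0 < rho) by (apply Rdiv_lt_0_compat; lra).
    destruct (HU _ Hr) as [T HT]. set (T' := Rmax T t0).
    assert (HT0: t0 <= T') by apply Rmax_r. assert (HTT: T' >= T) by (apply Rle_ge, Rmax_l).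
    assert (HG: forall t, t >= T' -> Rabs (Gf N alpha s x i t - f) <= 2 * rho * dg N alpha i).
    { intros t Ht. unfold Gf, f. rewrite <- fsum_minus. eapply Rle_trans; [apply fsum_abs|].
      unfold dg. rewrite <- fsum_scal. apply fsum_le. intros j Hj.
      replace (alpha i j * (sat (s j) (x j t) - sat (s i) (x i t)) - alpha i j * (z j - z i))
        with (alpha i j * ((sat (s j) (x j t) - sat (s j) C) - (sat (s i) (x i t) - sat (s i) C))) by (unfold z; ring).
      rewrite Rabs_mult, (Rabs_right (alpha i j)) by (apply Rle_ge, Ha; auto).
      replace (2 * rho * alpha i j) with (alpha i j * (2 * rho)) by ring.
      apply Rmult_le_compat_l; [apply Ha; auto|].
      eapply Rle_trans; [apply Rabs_triang|]. rewrite Rabs_Ropp.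
      pose proof (sat_lip (s j) (x j t) C (Hs j Hj)). pose proof (sat_lip (s i) (x i t) C (Hs i Hi)).
      pose proof (HT j Hj t ltac:(lra)). pose proof (HT i Hi t ltac:(lra)). lra. }
    destruct (MVT_cor2 (x i) (Gf N alpha s x i) T' (T' + 1)) as [xi [Hxi1 Hxi2]]; [lra| intros; apply Hsol; auto; lra|].
    replace (T' + 1 - T') with 1 in Hxi1 by ring. rewrite Rmult_1_r in Hxi1.
    pose proof (HG xi ltac:(lra)) as HGx.
    assert (2 * rho * dg N alpha i < kap).
    { unfold rho. apply (Rmult_lt_reg_r (2 * (dg N alpha i + 1))); [lra|]. field_simplify; [|lra]. nra. }
    assert (kap < Rabs (Gf N alpha s x i xi)).
    { pose proof (Rabs_triang_inv f (f - Gf N alpha s x i xi)). rewrite Rabs_minus_sym in HGx.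
      replace (f - (f - Gf N alpha s x i xi)) with (Gf N alpha s x i xi) in H0 by ring. unfold kap in *. lra. }
    pose proof (HT i Hi (T' + 1) ltac:(lra)). pose proof (HT i Hi T' ltac:(lra)).
    assert (Rabs (x i (T' + 1) - x i T') < 2 * rho).
    { replace (x i (T' + 1) - x i T') with ((x i (T' + 1) - C) - (x i T' - C)) by ring.
      eapply Rle_lt_trans; [apply Rabs_triang|]. rewrite Rabs_Ropp. lra. }
    assert (2 * rho <= kap). { unfold rho. apply (Rmult_le_reg_r (2 * (dg N alpha i + 1))); [lra|]. field_simplify; [|lra]. nra. }
    rewrite Hxi1 in H3. lra. }
  destruct (fin_argmax N z HN) as [ks [Hks Hmax]].
  set (M := z ks).
  assert (Hprop: forall u v, edge N alpha u v -> z u = M -> z v = M).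
  { intros u v [Hu [Hv Huv]] Hzu.
    assert (Hterms: forall j, (j < N)%nat -> 0 <= - (alpha u j * (z j - z u))).
    { intros j Hj. pose proof (Hmax j Hj). pose proof (Ha u j Hu Hj). rewrite Hzu. fold M in H. nra. }
    assert (fsum N (fun j => - (alpha u j * (z j - z u))) = 0).
    { rewrite (fsum_ext _ _ (fun j => -1 * (alpha u j * (z j - z u)))) by (intros; ring). rewrite fsum_scal, Hf; auto; ring. }
    pose proof (fsum_nonneg_eq0 _ _ Hterms H v Hv). simpl in H0.
    assert (alpha u v * (z v - z u) = 0) by lra. destruct (Rmult_integral _ _ H1); lra. }
  assert (Hzall: forall j, (j < N)%nat -> z j = M).
  { intros j Hj. destruct (Nat.eq_dec j ks) as [->|Hne']; [reflexivity|].
    apply (reach_fwd (edge N alpha) (fun v => z v = M) Hprop ks j); auto. }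
  intros i0 Hi0. destruct (Rle_dec (Rabs c) (s i0)) as [|Hbad]; auto. exfalso.
  assert (HMC: M <> C).
  { intro HMC'. pose proof (Hzall i0 Hi0). unfold z in H. pose proof (sat_bound (s i0) C (Hs i0 Hi0)).
    rewrite H, HMC', <- HcC in H0. lra. }
  assert (HeC: 0 < Rabs (C - M)) by (apply Rabs_pos_lt; lra).
  destruct (HU _ HeC) as [T1 HT1]. set (T := Rmax T1 t0).
  assert (HT0: t0 <= T) by apply Rmax_r. assert (HTT: T >= T1) by (apply Rle_ge, Rmax_l).
  assert (Hflat: forall j t, (j < N)%nat -> t >= T -> sat (s j) (x j t) = M).
  { intros j t Hj Ht. apply (sat_flat (s j) C M); [auto| apply (Hzall j Hj)| auto| apply HT1; auto; lra]. }
  assert (HxT: forall j, (j < N)%nat -> x j T = C).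
  { intros j Hj.
    assert (Hcst: forall t, t >= T -> x j t = x j T).
    { intros t Ht. apply (const_interval (x j) (Gf N alpha s x j)); [lra| intros; apply Hsol; auto; lra|].
      intros u Hu. unfold Gf. rewrite (fsum_ext _ _ (fun _ => 0)). apply fsum_zero.
      intros k Hk. rewrite (Hflat k u), (Hflat j u) by (auto; lra). ring. }
    destruct (Req_dec (x j T) C) as [|Hn]; auto. exfalso.
    assert (He: 0 < Rabs (x j T - C)) by (apply Rabs_pos_lt; lra).
    destruct (HC j Hj _ He) as [T2 HT2]. set (t := Rmax T T2).
    pose proof (HT2 t (Rle_ge _ _ (Rmax_r T T2))). rewrite Hcst in H by (apply Rle_ge, Rmax_l). lra. }
  (* step 5: Gronwall backward *)
  destruct (fin_max2 N N alpha) as [Am [HAm HAmp]].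
  set (K := 4 * INR N * Am).
  set (g := fun t => fsum N (fun i => (x i t - C) * (x i t - C))).
  assert (Hgd: forall t, t0 <= t -> derivable_pt_lim g t (fsum N (fun i => 2 * (x i t - C) * Gf N alpha s x i t))).
  { intros t Ht. apply (dpl_fsum N (fun i u => (x i u - C) * (x i u - C))). intros i Hi. apply dpl_sq. apply Hsol; auto. }
  assert (Hgb: forall t, t0 <= t -> - (K * g t) <= fsum N (fun i => 2 * (x i t - C) * Gf N alpha s x i t)).
  { intros t Ht.
    assert (Hsq: forall v, Rabs v * Rabs v = v * v) by (intros v; rewrite <- Rabs_mult; apply Rabs_right; apply Rle_ge, Rle_0_sqr).
    assert (Hper: forall i, (i < N)%nat -> - (Am * (3 * INR N * ((x i t - C) * (x i t - C)) + g t)) <= 2 * (x i t - C) * Gf N alpha s x i t).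
    { intros i Hi.
      assert (HGi: Rabs (Gf N alpha s x i t) <= fsum N (fun j => alpha i j * (Rabs (x j t - C) + Rabs (x i t - C)))).
      { unfold Gf. eapply Rle_trans; [apply fsum_abs|]. apply fsum_le. intros j Hj.
        rewrite Rabs_mult, (Rabs_right (alpha i j)) by (apply Rle_ge, Ha; auto).
        apply Rmult_le_compat_l; [apply Ha; auto|].
        replace (sat (s j) (x j t) - sat (s i) (x i t)) with ((sat (s j) (x j t) - sat (s j) C) - (sat (s i) (x i t) - sat (s i) C))
          by (pose proof (Hzall j Hj); pose proof (Hzall i Hi); unfold z in *; lra).
        eapply Rle_trans; [apply Rabs_triang|]. rewrite Rabs_Ropp.
        pose proof (sat_lip (s j) (x j t) C (Hs j Hj)). pose proof (sat_lip (s i) (x i t) C (Hs i Hi)). lra. }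
      assert (H2: fsum N (fun j => alpha i j * (2 * Rabs (x i t - C) * Rabs (x j t - C) + 2 * (Rabs (x i t - C) * Rabs (x i t - C))))
                 <= fsum N (fun j => Am * (3 * ((x i t - C) * (x i t - C)) + (x j t - C) * (x j t - C)))).
      { apply fsum_le. intros j Hj. rewrite <- (Hsq (x i t - C)), <- (Hsq (x j t - C)).
        pose proof (Ha i j Hi Hj). pose proof (HAmp i j Hi Hj).
        pose proof (Rabs_pos (x i t - C)). pose proof (Rabs_pos (x j t - C)).
        assert (2 * Rabs (x i t - C) * Rabs (x j t - C) + 2 * (Rabs (x i t - C) * Rabs (x i t - C)) <=
                3 * (Rabs (x i t - C) * Rabs (x i t - C)) + Rabs (x j t - C) * Rabs (x j t - C))
          by (pose proof (Rle_0_sqr (Rabs (x i t - C) - Rabs (x j t - C))); unfold Rsqr in *; nra).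
        assert (0 <= 3 * (Rabs (x i t - C) * Rabs (x i t - C)) + Rabs (x j t - C) * Rabs (x j t - C)) by nra.
        nra. }
      rewrite fsum_scal, fsum_plus, fsum_const in H2. fold (g t) in H2.
      assert (E2: fsum N (fun j => alpha i j * (2 * Rabs (x i t - C) * Rabs (x j t - C) + 2 * (Rabs (x i t - C) * Rabs (x i t - C))))
                  = 2 * Rabs (x i t - C) * fsum N (fun j => alpha i j * (Rabs (x j t - C) + Rabs (x i t - C)))).
      { rewrite <- fsum_scal. apply fsum_ext. intros; ring. }
      rewrite E2 in H2.
      assert (2 * Rabs (x i t - C) * Rabs (Gf N alpha s x i t) <= 2 * Rabs (x i t - C) * fsum N (fun j => alpha i j * (Rabs (x j t - C) + Rabs (x i t - C)))).
      { apply Rmult_le_compat_l; auto. pose proof (Rabs_pos (x i t - C)); lra. }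
      assert (- (2 * Rabs (x i t - C) * Rabs (Gf N alpha s x i t)) <= 2 * (x i t - C) * Gf N alpha s x i t).
      { rewrite <- (Rabs_right 2) at 1 by lra. rewrite <- !Rabs_mult.
        pose proof (Rle_abs (- (2 * (x i t - C) * Gf N alpha s x i t))) as Hra. rewrite Rabs_Ropp in Hra. lra. }
      rewrite <- (Hsq (x i t - C)) in H2 |- *. lra. }
    eapply Rle_trans; [|apply (fsum_le _ _ _ Hper)].
    rewrite (fsum_ext _ _ (fun i => -1 * (Am * (3 * INR N) * ((x i t - C) * (x i t - C)) + Am * g t))) by (intros; ring).
    rewrite fsum_scal, fsum_plus, fsum_scal, fsum_const. fold (g t). unfold K. lra. }
  set (h := fun t => - (g t * exp (K * t))).
  assert (Hh: h T <= h t0).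
  { apply (decr_interval h (fun t => - (fsum N (fun i => 2 * (x i t - C) * Gf N alpha s x i t) * exp (K * t) + g t * (exp (K * t) * K)))); auto.
    - intros t Ht. unfold h. apply (dpl_ext (opp_fct (mult_fct g (fun u => exp (K * u))))); [reflexivity|].
      exact (derivable_pt_lim_opp _ _ _ (derivable_pt_lim_mult g (fun u => exp (K*u)) t _ _ (Hgd t ltac:(lra)) (dpl_expK K t))).
    - intros t Ht. pose proof (Hgb t ltac:(lra)). pose proof (exp_pos (K * t)).
      assert (0 <= fsum N (fun i => 2 * (x i t - C) * Gf N alpha s x i t) + K * g t) by lra. nra. }
  assert (HgT: g T = 0). { unfold g. rewrite (fsum_ext _ _ (fun _ => 0)). apply fsum_zero. intros j Hj. rewrite HxT; auto; ring. }
  assert (Hg0: 0 <= g t0) by (apply fsum_nonneg; intros; apply Rle_0_sqr).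
  unfold h in Hh. rewrite HgT in Hh. pose proof (exp_pos (K * t0)).
  assert (g t0 = 0) by nra.
  destruct Hne as [a [b [Ha' [Hb' Hab]]]].
  assert (Hz0: forall k, (k < N)%nat -> x k t0 = C).
  { intros k Hk. pose proof (fsum_nonneg_eq0 N (fun i => (x i t0 - C) * (x i t0 - C))) as Z.
    assert ((x k t0 - C) * (x k t0 - C) = 0) by (apply Z; auto; intros; apply Rle_0_sqr).
    destruct (Rmult_integral _ _ H1); lra. }
  apply Hab. rewrite !Hz0; auto.
Qed.

Theorem theorem5 (N : nat) (alpha : nat -> nat -> R) (s : nat -> R)
    (p : nat -> R) (t0 : R) (x : nat -> R -> R) :
  (forall i j, (i < N)%nat -> (j < N)%nat -> 0 <= alpha i j) ->
  strongly_connected N alpha ->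
  (forall i, (i < N)%nat -> 0 < s i) ->
  left_null N alpha p ->
  fsum N p = 1 ->
  is_solution N alpha s t0 x ->
  (exists i j, (i < N)%nat /\ (j < N)%nat /\ x i t0 <> x j t0) ->
  (consensus N x <->
   forall i, (i < N)%nat -> Rabs (fsum N (fun k => p k * x k t0)) <= s i).
Proof.
  intros Ha Hsc Hs Hl Hp1 Hsol Hne.
  assert (HN: (0 < N)%nat) by (destruct Hne as [i [j [Hi _]]]; lia).
  split.
  - intros Hc. apply (onlyif_dir N alpha s p t0 x); auto.
  - intros Hc. apply (conv_dir N alpha s p t0 x); auto.
Qed.
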